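(* Let $\mathcal D=(A,D)$ be a dependence alphabet and $\mathcal L\subseteq\mathbb M(\mathcal D)$ rational. Then there are a dependence alphabet $\mathcal D'=(A',D')$ with $A\subseteq A'$ and $D=D'\cap(A\times A)$, a trace-pushdown system $\mathcal P=(Q,\Delta)$ over $\mathcal D'$, a configuration $c$ of $\mathcal P$ and a state $q\in Q$ such that $\mathcal L=\{[w]\mid w\in A^*,\ c\vdash^*_{\mathcal P}(q,[w])\}$.
   Context: A dependence alphabet is $\mathcal D=(A,D)$, $A$ finite, $D\subseteq A\times A$ reflexive and symmetric. $D(a)=\{c\mid(a,c)\in D\}$, $D(w)=\bigcup_{a\text{ in }w}D(a)$. Letters $a,b$ independent if $(a,b)\notin D$; $u\parallel v$ if every letter of $u$ is independent of every letter of $v$. $\sim$ least congruence on $A^*$ with $ab\sim ba$ for independent $a,b$; $\mathbb M(\mathcal D)=A^*/{\sim}$; $[w]$ class of $w$. A trace language $\mathcal L$ is rational if $\mathcal L=[L]$ for a regular $L\subseteq A^*$. Since $D=D'\cap(A\times A)$, for $w,w'\in A^*$ we have $w\sim_{\mathcal D}w'$ iff $w\sim_{\mathcal D'}w'$, so $\mathbb M(\mathcal D)$ is identified with the submonoid of $\mathbb M(\mathcal D')$ generated by $A$, and $[w]$ for $w\in A^*$ is read in either monoid. Pushdown system over $\mathcal D'$: $\mathcal P=(Q,\Delta)$, $Q$ finite, $\Delta\subseteq Q\times A'\times A'^*\times Q$ finite; configurations $Q\times\mathbb M(\mathcal D')$; $(p,s)\vdash_{\mathcal P}(q,t)$ iff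 there are $(p,a,w,q)\in\Delta$, $x\in A'^*$ with $s=[ax]$, $t=[wx]$; $\vdash^*_{\mathcal P}$ reflexive transitive closure. Trace-pushdown system: (P1) $D'(w)\subseteq D'(a)$ for all $(p,a,w,q)\in\Delta$; (P2') whenever $(p,a,v,q),(q,b,w,r)\in\Delta$ with $av\parallel bw$ (w.r.t. $D'$) there is $q'$ with $(p,b,w,q'),(q',a,v,r)\in\Delta$. *)

(* Defs.v *)
From mathcomp Require Import all_boot.
From Stdlib Require Import Relation_Operators.
Set Implicit Arguments. Unset Strict Implicit. Unset Printing Implicit Defensive.

Definition letter := nat.
Definition word := seq letter.

Definition dep_alphabet (A : seq letter) (D : rel letter) : Prop :=
  [/\ (forall a b, D a b -> (a \in A) && (b \in A)),
      {in A, forall a, D a a} &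
      (forall a b, D a b -> D b a)].

Definition swap1 (D : rel letter) (u v : word) : Prop :=
  exists (x y : word) (a b : letter),
    ~~ D a b /\ u = x ++ a :: b :: y /\ v = x ++ b :: a :: y.

Definition trace_eq (D : rel letter) : word -> word -> Prop :=
  clos_refl_sym_trans word (swap1 D).

Fixpoint nfa_acc (S : finType) (fin : pred S) (tr : S -> letter -> S -> bool)
    (s : S) (w : word) : bool :=
  match w with
  | [::] => fin s
  | a :: w' => [exists s', tr s a s' && nfa_acc fin tr s' w']
  end.

Definition regular (A : seq letter) (L0 : word -> Prop) : Prop :=
  exists (S : finType) (init fin : pred S) (tr : S -> letter -> S -> bool),
    forall w, L0 w <-> (all (mem A) w /\ exists2 s, init s & nfa_acc fin tr s w).

(* a trace language, given by the predicate "w represents a trace of L",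
   is rational if it is [L0] for a regular L0 ⊆ A^* *)
Definition rational_trace_lang (A : seq letter) (D : rel letter) (L : word -> Prop) : Prop :=
  exists L0, regular A L0 /\ forall w, L w <-> exists2 w0, L0 w0 & trace_eq D w0 w.

Definition rule (Q : finType) : Type := (Q * letter * word * Q)%type.

Definition pd_step (Q : finType) (D' : rel letter) (Delta : seq (rule Q))
    (c d : Q * word) : Prop :=
  exists p a w q (x : word),
    (p, a, w, q) \in Delta /\ c.1 = p /\ d.1 = q /\
    trace_eq D' c.2 (a :: x) /\ trace_eq D' d.2 (w ++ x).

(* configurations are considered up to trace equivalence; |-* is the
   reflexive-transitive closure of |- *)
Definition pd_reach (Q : finType) (D' : rel letter) (Delta : seq (rule Q)) :
    Q * word -> Q * word -> Prop :=
  clos_refl_trans (Q * word)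
    (fun c d => (c.1 = d.1 /\ trace_eq D' c.2 d.2) \/ pd_step D' Delta c d).

Definition indep_words (D : rel letter) (u v : word) : Prop :=
  forall a b, a \in u -> b \in v -> ~~ D a b.

Definition trace_pushdown (A' : seq letter) (D' : rel letter) (Q : finType)
    (Delta : seq (rule Q)) : Prop :=
  [/\
      (forall p a w q, (p, a, w, q) \in Delta -> (a \in A') && all (mem A') w),
      (forall p a w q, (p, a, w, q) \in Delta ->
         forall c e, c \in w -> e \in A' -> D' c e -> D' a e) &
      (forall p a v q b w r, (p, a, v, q) \in Delta -> (q, b, w, r) \in Delta ->
         indep_words D' (a :: v) (b :: w) ->
         exists q', ((p, b, w, q') \in Delta) && ((q', a, v, r) \in Delta))].

(* Main.v *)
Require Import Defs.
From mathcomp Require Import all_boot.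
From Stdlib Require Import Relation_Operators.
Set Implicit Arguments. Unset Strict Implicit. Unset Printing Implicit Defensive.

Lemma teq_trans D u v w : trace_eq D u v -> trace_eq D v w -> trace_eq D u w.
Proof. exact: rst_trans. Qed.
Lemma teq_sym D u v : trace_eq D u v -> trace_eq D v u.
Proof. exact: rst_sym. Qed.
Lemma teq_refl D u : trace_eq D u u.
Proof. exact: rst_refl. Qed.

Lemma teq_catl D p x y : trace_eq D x y -> trace_eq D (p ++ x) (p ++ y).
Proof.
elim=> [u v [x1 [y1 [a [b [Hab [-> ->]]]]]]| u | u v _ IH | u v w _ IH1 _ IH2].
- apply: rst_step; exists (p ++ x1), y1, a, b; by rewrite !catA.
- exact: rst_refl.
- exact: rst_sym.
- exact: rst_trans IH2.
Qed.

Lemma teq_sub (D D' : rel letter) u v : (forall a b, D a b -> D' a b) ->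
  trace_eq D' u v -> trace_eq D u v.
Proof.
move=> HD; elim=> [u0 v0 [x1 [y1 [a [b [Hab [-> ->]]]]]]| u0 | u0 v0 _ IH | u0 v0 w _ IH1 _ IH2].
- apply: rst_step; exists x1, y1, a, b; split=> //.
  by apply/negP=> /HD; rewrite (negbTE Hab).
- exact: rst_refl.
- exact: rst_sym.
- exact: rst_trans IH2.
Qed.

Lemma rem_cat (h : letter) x s :
  rem h (x ++ s) = if h \in x then rem h x ++ s else x ++ rem h s.
Proof.
elim: x => //= c x IH; rewrite in_cons.
case: (eqVneq c h) => [->|Nch]; first by rewrite ?eqxx.
rewrite /= IH; by case: (h \in x).
Qed.

Lemma teq_rem (D : rel letter) h u v : D h h ->
  trace_eq D u v -> trace_eq D (rem h u) (rem h v).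
Proof.
move=> Dhh; elim=> [u0 v0 [x1 [y1 [a [b [Hab [-> ->]]]]]]| u0 | u0 v0 _ IH | u0 v0 w _ IH1 _ IH2].
- rewrite !rem_cat; case: (h \in x1).
    by apply: rst_step; exists (rem h x1), y1, a, b.
  apply: teq_catl => /=.
  case: (eqVneq a h) => [Eah|Nah].
    subst a; case: (eqVneq b h) => [Ebh|Nbh]; first by subst b; rewrite Dhh in Hab.
    by rewrite /= ?eqxx ?(negbTE Nbh) ?(eq_sym h b) ?(negbTE Nbh) /= ?eqxx; exact: rst_refl.
  case: (eqVneq b h) => [Ebh|Nbh].
    by subst b; rewrite /= ?eqxx ?(negbTE Nah) ?(eq_sym h a) ?(negbTE Nah) /= ?eqxx; exact: rst_refl.
  rewrite /= ?(eq_sym h a) ?(eq_sym h b) ?(negbTE Nah) ?(negbTE Nbh).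
  by apply: rst_step; exists [::], (rem h y1), a, b.
- exact: rst_refl.
- exact: rst_sym.
- exact: rst_trans IH2.
Qed.

Lemma teq_cancel (D : rel letter) h x v : D h h ->
  trace_eq D (h :: x) (h :: v) -> trace_eq D x v.
Proof. by move=> Dhh /(teq_rem Dhh) /=; rewrite eqxx. Qed.

Definition hh (A : seq letter) : letter := (sumn A).+1.

Lemma hh_notin A : hh A \notin A.
Proof.
suff H : forall a, a \in A -> a <= sumn A.
  by apply/negP => /H; rewrite /hh ltnn.
elim: A => //= b A IH a; rewrite in_cons => /orP[/eqP->|/IH H].
  exact: leq_addr.
exact: leq_trans H (leq_addl _ _).
Qed.

Definition Dp (A : seq letter) (D : rel letter) : rel letter :=
  fun a b => D a b || ((a == hh A) && (b \in hh A :: A))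
                   || ((b == hh A) && (a \in hh A :: A)).

Definition Delta (S : finType) (init fin : pred S) (tr : S -> letter -> S -> bool)
  (A : seq letter) : seq (rule (bool + S)%type) :=
  [seq ((inl true : (bool + S)%type), hh A, [:: hh A], (inr f : (bool + S)%type))
     | f <- enum S & fin f]
  ++ [seq ((inr x.2.2 : (bool + S)%type), hh A, [:: hh A; x.2.1], (inr x.1 : (bool + S)%type))
     | x <- [seq (s, bs) | s <- enum S, bs <- [seq (b, s') | b <- A, s' <- enum S]]
     & tr x.1 x.2.1 x.2.2]
  ++ [seq ((inr s : (bool + S)%type), hh A, [::], (inl false : (bool + S)%type))
     | s <- enum S & init s].

Lemma inDelta (S : finType) (init fin : pred S) (tr : S -> letter -> S -> bool)
  (A : seq letter) r : r \in Delta init fin tr A ->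
  [\/ exists f, fin f /\ r = (inl true, hh A, [:: hh A], inr f),
      exists s b s', [/\ b \in A, tr s b s' & r = (inr s', hh A, [:: hh A; b], inr s)] |
      exists s, init s /\ r = (inr s, hh A, [::], inl false)].
Proof.
rewrite !mem_cat => /or3P [] /mapP [x]; rewrite mem_filter => /andP [Hx Hx'] ->.
- by apply: Or31; exists x.
- move: Hx' Hx => /allpairsP [[s bs] [_ /= /allpairsP [[b s'] [/= Hb _ ->]] ->]] /= Htr.
  by apply: Or32; exists s, b, s'.
- by apply: Or33; exists x.
Qed.

Theorem proposition6p2 (A : seq letter) (D : rel letter) (L : word -> Prop) :
  dep_alphabet A D ->
  rational_trace_lang A D L ->
  exists (A' : seq letter) (D' : rel letter),
    [/\ dep_alphabet A' D', {subset A <= A'} &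
        (forall a b, D a b = [&& a \in A, b \in A & D' a b])] /\
    exists (Q : finType) (Delta : seq (rule Q)) (c : Q * word) (q : Q),
      [/\ trace_pushdown A' D' Delta, all (mem A') c.2 &
          forall w, L w <->
            exists2 w', all (mem A) w' /\ trace_eq D w' w & pd_reach D' Delta c (q, w')].
Proof.
move=> [HDA HDr HDs] [L0 [[S [init [fin [tr HL0]]]] HL]].
set h := hh A.
have hA : h \notin A := hh_notin A.
have DDp : forall a b, D a b -> Dp A D a b by move=> a b H; rewrite /Dp H.
have Dhe : forall e, e \in h :: A -> Dp A D h e by move=> e He; rewrite /Dp eqxx He /= orbT.
have Dhh : Dp A D h h by apply: Dhe; rewrite in_cons eqxx.
exists (h :: A), (Dp A D); split.
  split.
  - split.
    + move=> a b; rewrite /Dp => /orP [/orP [H|/andP [/eqP -> Hb]]|/andP [/eqP -> Ha]].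
      * by move: (HDA a b H) => /andP [Ha Hb]; rewrite !in_cons Ha Hb !orbT.
      * by rewrite in_cons eqxx.
      * by rewrite Ha in_cons eqxx.
    + move=> a; rewrite in_cons => /orP [/eqP ->|Ha]; first exact: Dhh.
      by rewrite /Dp HDr.
    + move=> a b; rewrite /Dp => /orP [/orP [H|H]|H].
      * by rewrite (HDs _ _ H).
      * by rewrite H !orbT.
      * by rewrite H orbT.
  - by move=> a Ha; rewrite in_cons Ha orbT.
  - move=> a b; case Hab: (D a b).
      by move: (HDA a b Hab) => /andP [-> ->]; rewrite /Dp Hab.
    case Ha: (a \in A) => //; case Hb: (b \in A) => //=.
    rewrite /Dp Hab /=.
    have -> : (a == h) = false by apply/eqP => E; rewrite -E Ha in hA.
    by have -> : (b == h) = false by apply/eqP => E; rewrite -E Hb in hA.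
exists (bool + S)%type, (Delta init fin tr A), (inl true, [:: h]), (inl false).
split.
- split.
  + move=> p a w q /inDelta [[f [_ [_ -> -> _]]]|[s [b [s' [Hb _ [_ -> -> _]]]]]|[s [_ [_ -> -> _]]]] /=;
      by rewrite ?in_cons ?eqxx ?Hb ?orbT.
  + move=> p a w q /inDelta [[f [_ [_ -> _ _]]]|[s [b [s' [Hb _ [_ -> _ _]]]]]|[s [_ [_ -> _ _]]]] c e _ He _;
      exact: Dhe.
  + move=> p a v q b w r /inDelta H1 /inDelta H2 Hind.
    have Ea : a = h by case: H1 => [[f [_ [_ -> _ _]]]|[s [b' [s' [_ _ [_ -> _ _]]]]]|[s [_ [_ -> _ _]]]].
    have Eb : b = h by case: H2 => [[f [_ [_ -> _ _]]]|[s [b' [s' [_ _ [_ -> _ _]]]]]|[s [_ [_ -> _ _]]]].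
    by move: (Hind a b); rewrite !in_cons !eqxx Ea Eb Dhh => /(_ isT isT).
- by rewrite /= in_cons eqxx.
set T' := trace_eq (Dp A D).
pose Inv (c : (bool + S)%type * word) : Prop :=
  match c.1 with
  | inl true => T' c.2 [:: h]
  | inl false => exists2 v, (all (mem A) v /\ exists2 s, init s & nfa_acc fin tr s v) & T' c.2 v
  | inr s => exists2 v, all (mem A) v /\ nfa_acc fin tr s v & T' c.2 (h :: v)
  end.
have Inv_step : forall c d, pd_reach (Dp A D) (Delta init fin tr A) c d -> Inv c -> Inv d.
  move=> c0 d0; elim => [c d [[E Hcd]|[p [a [w [q [x [HD [Ep [Eq [Hc Hd]]]]]]]]]]| c | c d e _ IH1 _ IH2];
    last 2 first.
  - done.
  - by move=> /IH1 /IH2.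
  - rewrite /Inv -E; case: c.1 => [[]|s].
    + by move=> H; apply: teq_trans H; apply: teq_sym.
    + by move=> [v Hv H]; exists v => //; apply: teq_trans H; apply: teq_sym.
    + by move=> [v Hv H]; exists v => //; apply: teq_trans H; apply: teq_sym.
  - rewrite /Inv Ep Eq; move: Hc Hd.
    case/inDelta: HD => [[f [Hf [-> -> -> ->]]]|[s [b [s' [Hb Htr [-> -> -> ->]]]]]|[s [Hs [-> -> -> ->]]]] Hc Hd.
    + move=> Hc0; exists [::] => //; rewrite /T'.
      apply: teq_trans Hd _; apply: teq_trans (teq_sym Hc) Hc0.
    + move=> [v [Hv Hacc] Hcv].
      have Hxv : T' x v by apply: (teq_cancel Dhh); apply: teq_trans (teq_sym Hc) Hcv.
      exists (b :: v).
        split; first by rewrite /= Hb.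
        by rewrite /=; apply/existsP; exists s'; rewrite Htr.
      apply: teq_trans Hd _; exact: (teq_catl [:: h; b] Hxv).
    + move=> [v [Hv Hacc] Hcv].
      have Hxv : T' x v by apply: (teq_cancel Dhh); apply: teq_trans (teq_sym Hc) Hcv.
      exists v; first by split => //; exists s.
      exact: teq_trans Hd Hxv.
have Hbuild : forall v s, all (mem A) v -> nfa_acc fin tr s v ->
    pd_reach (Dp A D) (Delta init fin tr A) (inl true, [:: h]) (inr s, h :: v).
  elim=> [|b v IH] s /=.
  - move=> _ Hf; apply: rt_step; right.
    exists (inl true), h, [:: h], (inr s), [::]; split.
      by rewrite !mem_cat; apply/orP; left; apply/mapP; exists s; rewrite // mem_filter Hf mem_enum.
    by do 2 split => //; split; exact: teq_refl.
  - move=> /andP [Hb Hv] /existsP [s' /andP [Htr Hacc]].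
    apply: rt_trans (IH s' Hv Hacc) _; apply: rt_step; right.
    exists (inr s'), h, [:: h; b], (inr s), v; split.
      rewrite !mem_cat; apply/orP; right; apply/orP; left.
      apply/mapP; exists (s, (b, s')) => //; rewrite mem_filter /= Htr /=.
      by apply: allpairs_f; rewrite ?mem_enum //; apply: allpairs_f; rewrite ?mem_enum.
    by do 2 split => //; split; exact: teq_refl.
move=> w; split.
- move=> /HL [w0 /HL0 [Hw0 [s Hs Hacc]] Hw].
  exists w0 => //.
  apply: rt_trans (Hbuild w0 s Hw0 Hacc) _; apply: rt_step; right.
  exists (inr s), h, [::], (inl false), w0; split.
    rewrite !mem_cat; apply/orP; right; apply/orP; right.
    by apply/mapP; exists s; rewrite // mem_filter Hs mem_enum.
  by do 2 split => //; split; exact: teq_refl.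
- move=> [w' [Hw' Hw'w] Hr].
  have [v Hv Hw'v] : Inv (inl false, w') by apply: Inv_step Hr _; exact: teq_refl.
  apply/HL; exists v; first by apply/HL0.
  apply: teq_trans Hw'w; apply: teq_sym; exact: teq_sub DDp Hw'v.
Qed.
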